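(* Let $p,q,r$ be positive integers with $\frac1p+\frac1q+\frac1r\le1$, $M=\max\{p,q,r\}$, $m>0$, and let $a$ be a real number with $a>\max\{12M,\,m^2(m+3)\}$. Let $f(x,y,z)=x^p+y^q+z^r+axyz$ and $V_a(1,t)=f^{-1}(t)\cap D^6_1$, where $D^6_1$ is the closed unit ball in $\mathbb C^3$. Then for any real $\theta$, $V_a(1,\frac1a e^{i\theta})$ is a Milnor fiber of $f$, and every point $(x,y,z)\in V_a(1,\frac1ae^{i\theta})$ satisfies $\max\{|x|,|y|,|z|\}>\frac ma$.
   Context: The Milnor radius $\varepsilon_f$ of $f$ is the supremum of $\varepsilon$ such that every sphere $S^5_\rho$ ($0<\rho\le\varepsilon$) centered at the origin is transverse to $f^{-1}(0)$. A Milnor fiber of $f$ is a set $f^{-1}(\delta e^{i\theta})\cap D^6_\varepsilon$ where $\varepsilon<\varepsilon_f$ and $\delta>0$ is such that $f^{-1}(s)$ meets $S^5_\varepsilon$ transversally for all $0\le|s|\le\delta$. *)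

(* Defs.v *)
From Stdlib Require Import Reals.
From Coquelicot Require Import Coquelicot.
Open Scope R_scope.

Definition C3 : Type := (C * C * C)%type.

Definition C3_NM : NormedModule R_AbsRing :=
  prod_NormedModule R_AbsRing
    (prod_NormedModule R_AbsRing C_R_NormedModule C_R_NormedModule)
    C_R_NormedModule.

Definition cx (w : C3) : C := fst (fst w).
Definition cy (w : C3) : C := snd (fst w).
Definition cz (w : C3) : C := snd w.

Fixpoint cpow (z : C) (n : nat) : C :=
  match n with O => RtoC 1 | S k => Cmult z (cpow z k) end.

Definition cexpi (th : R) : C := (cos th, sin th).

Definition nrm2 (w : C3) : R :=
  (Cmod (cx w))^2 + (Cmod (cy w))^2 + (Cmod (cz w))^2.

Definition nrm (w : C3) : R := sqrt (nrm2 w).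

Definition rinner (w v : C3) : R :=
  Re (Cmult (cx w) (Cconj (cx v))) + Re (Cmult (cy w) (Cconj (cy v)))
  + Re (Cmult (cz w) (Cconj (cz v))).

Definition fpqr (p q r : nat) (a : R) (w : C3) : C :=
  Cplus (Cplus (Cplus (cpow (cx w) p) (cpow (cy w) q)) (cpow (cz w) r))
        (Cmult (RtoC a) (Cmult (cx w) (Cmult (cy w) (cz w)))).

(* Transversality of the level set F^{-1}(s) and the sphere S_rho at a point w
   of both: the restriction of F to the sphere S_rho is a submersion at w, i.e.
   F is (real-)differentiable at w with derivative L, and L maps the real
   tangent space T_w S_rho = { v | <w, v> = 0 } onto C.  (This is equivalent to
   F^{-1}(s) being a smooth manifold at w that meets S_rho transversally.) *)
Definition transverse_at (F : C3 -> C) (w : C3) : Prop :=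
  exists L : C3 -> C,
    @filterdiff R_AbsRing C3_NM C_R_NormedModule F (locally (T := C3_NM) w) L /\
    forall c : C, exists v : C3, rinner w v = 0 /\ L v = c.

Definition sphere_transverse (F : C3 -> C) (rho : R) (s : C) : Prop :=
  forall w : C3, nrm w = rho -> F w = s -> transverse_at F w.

(* "eps < eps_F", where the Milnor radius eps_F is the supremum of the eps such
   that every sphere S_rho, 0 < rho <= eps, is transverse to F^{-1}(0). *)
Definition lt_milnor_radius (F : C3 -> C) (eps : R) : Prop :=
  exists eps', eps < eps' /\
    forall rho, 0 < rho <= eps' -> sphere_transverse F rho (RtoC 0).

Definition is_milnor_fiber (F : C3 -> C) (V : C3 -> Prop) : Prop :=
  exists eps delta th : R,
    0 < eps /\ lt_milnor_radius F eps /\ 0 < delta /\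
    (forall s : C, Cmod s <= delta -> sphere_transverse F eps s) /\
    (forall w : C3, V w <-> (F w = Cmult (RtoC delta) (cexpi th) /\ nrm w <= eps)).

Definition Va (p q r : nat) (a : R) (t : C) (w : C3) : Prop :=
  fpqr p q r a w = t /\ nrm w <= 1.

(* Main.v *)
Require Import Defs.
From Stdlib Require Import Reals Lra Lia Psatz.
From Coquelicot Require Import Coquelicot.
Open Scope R_scope.

Lemma fd_fst (U : NormedModule R_AbsRing) (x : U) (f : U -> C) lf :
  filterdiff f (locally x) lf ->
  filterdiff (fun t => fst (f t) : R_NormedModule) (locally x) (fun t => fst (lf t)).
Proof.
  intros H.
  apply (filterdiff_comp' f (fun c : C_R_NormedModule => (fst c : R_NormedModule)) x lf
     (fun c : C_R_NormedModule => (fst c : R_NormedModule))); auto.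
  apply filterdiff_linear.
  exact (@is_linear_fst R_AbsRing R_NormedModule R_NormedModule).
Qed.

Lemma fd_snd (U : NormedModule R_AbsRing) (x : U) (f : U -> C) lf :
  filterdiff f (locally x) lf ->
  filterdiff (fun t => snd (f t) : R_NormedModule) (locally x) (fun t => snd (lf t)).
Proof.
  intros H.
  apply (filterdiff_comp' f (fun c : C_R_NormedModule => (snd c : R_NormedModule)) x lf
     (fun c : C_R_NormedModule => (snd c : R_NormedModule))); auto.
  apply filterdiff_linear.
  exact (@is_linear_snd R_AbsRing R_NormedModule R_NormedModule).
Qed.

Lemma fd_pair (U : NormedModule R_AbsRing) (x : U) (f g : U -> R) lf lg :
  filterdiff (f : U -> R_NormedModule) (locally x) lf ->
  filterdiff (g : U -> R_NormedModule) (locally x) lg ->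
  filterdiff (fun t => (f t, g t) : C_R_NormedModule) (locally x) (fun t => (lf t, lg t)).
Proof.
  intros Hf Hg.
  apply (filterdiff_comp'_2 (W := C_R_NormedModule) f g (fun a b => (a, b)) x lf lg (fun a b => (a,b))); auto.
  apply filterdiff_linear.
  exact (@is_linear_prod R_AbsRing (prod_NormedModule R_AbsRing R_NormedModule R_NormedModule) R_NormedModule R_NormedModule _ _ is_linear_fst is_linear_snd).
Qed.

Lemma fd_Cmult (U : NormedModule R_AbsRing) (x : U) (f g : U -> C) lf lg :
  filterdiff f (locally x) lf -> filterdiff g (locally x) lg ->
  filterdiff (fun t => Cmult (f t) (g t) : C_R_NormedModule) (locally x)
    (fun t => Cplus (Cmult (lf t) (g x)) (Cmult (f x) (lg t))).
Proof.
  intros Hf Hg.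
  pose proof (fd_fst _ _ _ _ Hf) as F1. pose proof (fd_snd _ _ _ _ Hf) as F2.
  pose proof (fd_fst _ _ _ _ Hg) as G1. pose proof (fd_snd _ _ _ _ Hg) as G2.
  assert (comm : forall n m : R_AbsRing, mult n m = mult m n).
  { intros; apply Rmult_comm. }
  pose proof (filterdiff_mult_fct _ _ x _ _ comm F1 G1) as P11.
  pose proof (filterdiff_mult_fct _ _ x _ _ comm F1 G2) as P12.
  pose proof (filterdiff_mult_fct _ _ x _ _ comm F2 G1) as P21.
  pose proof (filterdiff_mult_fct _ _ x _ _ comm F2 G2) as P22.
  pose proof (filterdiff_minus_fct _ _ _ _ P11 P22) as Re.
  pose proof (filterdiff_plus_fct _ _ _ _ P12 P21) as Im.
  pose proof (fd_pair _ _ _ _ _ _ Re Im) as H.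
  eapply filterdiff_ext_lin.
  - eapply filterdiff_ext; [| exact H].
    intros t. reflexivity.
  - intros t. simpl. unfold Cplus, Cmult, minus, plus, opp, mult. simpl.
    f_equal; ring.
Qed.

Lemma fd_Cplus (U : NormedModule R_AbsRing) (x : U) (f g : U -> C) lf lg :
  filterdiff f (locally x) lf -> filterdiff g (locally x) lg ->
  filterdiff (fun t => Cplus (f t) (g t) : C_R_NormedModule) (locally x)
    (fun t => Cplus (lf t) (lg t)).
Proof.
  intros Hf Hg. exact (filterdiff_plus_fct _ _ _ _ Hf Hg).
Qed.

Lemma fd_const (U : NormedModule R_AbsRing) (x : U) (c : C) :
  filterdiff (fun _ : U => c : C_R_NormedModule) (locally x) (fun _ => RtoC 0).
Proof.
  exact (filterdiff_const (V := C_R_NormedModule) c).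
Qed.

Lemma ext_lin_C (U : NormedModule R_AbsRing) (x : U) (f l1 l2 : U -> C) :
  filterdiff (f : U -> C_R_NormedModule) (locally x) l1 -> (forall y, l1 y = l2 y) ->
  filterdiff (f : U -> C_R_NormedModule) (locally x) l2.
Proof. intros H E. exact (filterdiff_ext_lin _ _ _ H E). Qed.

Definition dcp (z : C) (n : nat) : C :=
  match n with O => RtoC 0 | S k => Cmult (RtoC (INR (S k))) (cpow z k) end.

Lemma fd_cpow (U : NormedModule R_AbsRing) (x : U) (h : U -> C) lh (n : nat) :
  filterdiff h (locally x) lh ->
  filterdiff (fun t => cpow (h t) n : C_R_NormedModule) (locally x)
    (fun t => Cmult (dcp (h x) n) (lh t)).
Proof.
  intros Hh. induction n as [|k IH].
  - apply (ext_lin_C U x _ (fun _ => RtoC 0)). exact (fd_const U x (RtoC 1)).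
    intros t. change (dcp (h x) 0) with (RtoC 0). rewrite Cmult_0_l. reflexivity.
  - apply (ext_lin_C U x _ _ _ (fd_Cmult _ _ _ _ _ _ Hh IH)).
    intros t. change (cpow (h x) (S k)) with (Cmult (h x) (cpow (h x) k)).
      change (dcp (h x) (S k)) with (Cmult (RtoC (INR (S k))) (cpow (h x) k)).
      destruct k as [|j].
      * change (dcp (h x) 0) with (RtoC 0). change (cpow (h x) 0) with (RtoC 1).
        change (INR 1) with 1. ring.
      * change (dcp (h x) (S j)) with (Cmult (RtoC (INR (S j))) (cpow (h x) j)).
        change (cpow (h x) (S j)) with (Cmult (h x) (cpow (h x) j)).
        rewrite (S_INR (S j)), RtoC_plus. ring.
Qed.

Lemma fd_cx (w : C3) : filterdiff (fun t : C3_NM => cx t : C_R_NormedModule) (locally w) (fun t => cx t).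
Proof.
  apply filterdiff_linear. unfold cx.
  apply (is_linear_comp (U := C3_NM) (fun t : C3_NM => (fst t : prod_NormedModule R_AbsRing C_R_NormedModule C_R_NormedModule)) (fun t : prod_NormedModule R_AbsRing C_R_NormedModule C_R_NormedModule => (fst t : C_R_NormedModule))).
  - exact (@is_linear_fst R_AbsRing (prod_NormedModule R_AbsRing C_R_NormedModule C_R_NormedModule) C_R_NormedModule).
  - exact (@is_linear_fst R_AbsRing C_R_NormedModule C_R_NormedModule).
Qed.

Lemma fd_cy (w : C3) : filterdiff (fun t : C3_NM => cy t : C_R_NormedModule) (locally w) (fun t => cy t).
Proof.
  apply filterdiff_linear. unfold cy.
  apply (is_linear_comp (U := C3_NM) (fun t : C3_NM => (fst t : prod_NormedModule R_AbsRing C_R_NormedModule C_R_NormedModule)) (fun t : prod_NormedModule R_AbsRing C_R_NormedModule C_R_NormedModule => (snd t : C_R_NormedModule))).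
  - exact (@is_linear_fst R_AbsRing (prod_NormedModule R_AbsRing C_R_NormedModule C_R_NormedModule) C_R_NormedModule).
  - exact (@is_linear_snd R_AbsRing C_R_NormedModule C_R_NormedModule).
Qed.

Lemma fd_cz (w : C3) : filterdiff (fun t : C3_NM => cz t : C_R_NormedModule) (locally w) (fun t => cz t).
Proof.
  apply filterdiff_linear. unfold cz.
  exact (@is_linear_snd R_AbsRing (prod_NormedModule R_AbsRing C_R_NormedModule C_R_NormedModule) C_R_NormedModule).
Qed.

Definition g1 (p : nat) (a : R) (w : C3) : C :=
  Cplus (dcp (cx w) p) (Cmult (RtoC a) (Cmult (cy w) (cz w))).
Definition g2 (q : nat) (a : R) (w : C3) : C :=
  Cplus (dcp (cy w) q) (Cmult (RtoC a) (Cmult (cx w) (cz w))).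
Definition g3 (r : nat) (a : R) (w : C3) : C :=
  Cplus (dcp (cz w) r) (Cmult (RtoC a) (Cmult (cx w) (cy w))).

Definition Lf p q r a (w v : C3) : C :=
  Cplus (Cplus (Cmult (g1 p a w) (cx v)) (Cmult (g2 q a w) (cy v))) (Cmult (g3 r a w) (cz v)).

Lemma fd_f p q r a (w : C3) :
  @filterdiff R_AbsRing C3_NM C_R_NormedModule (fpqr p q r a) (locally (T := C3_NM) w) (Lf p q r a w).
Proof.
  pose proof (fd_cpow _ _ _ _ p (fd_cx w)) as Hx.
  pose proof (fd_cpow _ _ _ _ q (fd_cy w)) as Hy.
  pose proof (fd_cpow _ _ _ _ r (fd_cz w)) as Hz.
  pose proof (fd_Cmult _ _ _ _ _ _ (fd_cy w) (fd_cz w)) as Hyz.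
  pose proof (fd_Cmult _ _ _ _ _ _ (fd_cx w) Hyz) as Hxyz.
  pose proof (fd_Cmult _ _ _ _ _ _ (fd_const _ w (RtoC a)) Hxyz) as HA.
  pose proof (fd_Cplus _ _ _ _ _ _ (fd_Cplus _ _ _ _ _ _ (fd_Cplus _ _ _ _ _ _ Hx Hy) Hz) HA) as H.
  apply (ext_lin_C C3_NM w _ _ _ H).
  intros v. unfold Lf, g1, g2, g3. ring.
Qed.

Lemma RtoC_Cmod2 (u : C) : RtoC (Cmod u ^ 2) = Cmult u (Cconj u).
Proof. exact (Cmod2_conj u). Qed.

Lemma conj_RtoC (r : R) : Cconj (RtoC r) = RtoC r.
Proof. unfold Cconj, RtoC. simpl. f_equal. ring. Qed.

Lemma transv (w : C3) (G1 G2 G3 : C) (c : C) :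
  0 < nrm2 w ->
  ~ (exists mu : C, G1 = Cmult mu (Cconj (cx w)) /\ G2 = Cmult mu (Cconj (cy w)) /\
                    G3 = Cmult mu (Cconj (cz w))) ->
  exists v : C3, rinner w v = 0 /\
    Cplus (Cplus (Cmult G1 (cx v)) (Cmult G2 (cy v))) (Cmult G3 (cz v)) = c.
Proof.
  intros Hpos Hnot.
  set (x := cx w) in *. set (y := cy w) in *. set (z := cz w) in *.
  set (N := nrm2 w).
  assert (HN : RtoC N = (x * Cconj x + y * Cconj y + z * Cconj z)%C).
  { unfold N, nrm2. rewrite !RtoC_plus, !RtoC_Cmod2. reflexivity. }
  assert (HN0 : RtoC N <> RtoC 0).
  { intros E. apply RtoC_inj in E. unfold N in E. lra. }
  set (S := (G1 * x + G2 * y + G3 * z)%C).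
  set (mu := (S / RtoC N)%C).
  set (e1 := (G1 - mu * Cconj x)%C).
  set (e2 := (G2 - mu * Cconj y)%C).
  set (e3 := (G3 - mu * Cconj z)%C).
  assert (Hsum : (x * e1 + y * e2 + z * e3)%C = RtoC 0).
  { transitivity (S - mu * (x * Cconj x + y * Cconj y + z * Cconj z))%C.
    - unfold e1, e2, e3, S. ring.
    - rewrite <- HN. unfold mu. field. exact HN0. }
  set (E := Cmod e1 ^ 2 + Cmod e2 ^ 2 + Cmod e3 ^ 2).
  assert (HEpos : 0 < E).
  { destruct (Req_dec E 0) as [HE0|HE0].
    - exfalso. apply Hnot. exists mu.
      assert (h1 := pow2_ge_0 (Cmod e1)). assert (h2 := pow2_ge_0 (Cmod e2)).
      assert (h3 := pow2_ge_0 (Cmod e3)).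
      assert (z1 : Cmod e1 = 0) by (unfold E in HE0; assert (0 <= Cmod e1) by apply Cmod_ge_0; nra).
      assert (z2 : Cmod e2 = 0) by (unfold E in HE0; assert (0 <= Cmod e2) by apply Cmod_ge_0; nra).
      assert (z3 : Cmod e3 = 0) by (unfold E in HE0; assert (0 <= Cmod e3) by apply Cmod_ge_0; nra).
      apply Cmod_eq_0 in z1, z2, z3.
      split; [|split]; apply Ceq_minus; assumption.
    - unfold E in *. assert (h1 := pow2_ge_0 (Cmod e1)). assert (h2 := pow2_ge_0 (Cmod e2)).
      assert (h3 := pow2_ge_0 (Cmod e3)). lra. }
  assert (HE : RtoC E = (e1 * Cconj e1 + e2 * Cconj e2 + e3 * Cconj e3)%C).
  { unfold E. rewrite !RtoC_plus, !RtoC_Cmod2. reflexivity. }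
  assert (HE0 : RtoC E <> RtoC 0).
  { intros H. apply RtoC_inj in H. lra. }
  exists ((c * Cconj e1 / RtoC E, c * Cconj e2 / RtoC E), c * Cconj e3 / RtoC E)%C.
  split.
  - unfold rinner. cbn [cx cy cz fst snd].
    change x with (cx w). change y with (cy w). change z with (cz w).
    set (v1 := (c * Cconj e1 / RtoC E)%C). set (v2 := (c * Cconj e2 / RtoC E)%C).
    set (v3 := (c * Cconj e3 / RtoC E)%C).
    change (Re (cx w * Cconj v1)%C + Re (cy w * Cconj v2)%C + Re (cz w * Cconj v3)%C)
      with (Re (cx w * Cconj v1 + cy w * Cconj v2 + cz w * Cconj v3)%C).
    fold x y z.
    assert (Hc : (x * Cconj v1 + y * Cconj v2 + z * Cconj v3)%C = RtoC 0).
    { unfold v1, v2, v3. rewrite !Cdiv_conj by exact HE0.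
      rewrite !Cmult_conj, !Cconj_conj, conj_RtoC.
      transitivity (Cconj c / RtoC E * (x * e1 + y * e2 + z * e3))%C.
      - field. exact HE0.
      - rewrite Hsum. field. exact HE0. }
    rewrite Hc. reflexivity.
  - cbn [cx cy cz fst snd].
    transitivity (c / RtoC E * (G1 * Cconj e1 + G2 * Cconj e2 + G3 * Cconj e3))%C.
    { field. exact HE0. }
    assert (HG : (G1 * Cconj e1 + G2 * Cconj e2 + G3 * Cconj e3)%C = RtoC E).
    { transitivity ((e1 * Cconj e1 + e2 * Cconj e2 + e3 * Cconj e3)
                     + mu * (Cconj x * Cconj e1 + Cconj y * Cconj e2 + Cconj z * Cconj e3))%C.
      - unfold e1, e2, e3. ring.
      - rewrite <- HE. rewrite <- !Cmult_conj, <- !Cplus_conj. rewrite Hsum, conj_RtoC.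
        ring. }
    rewrite HG. field. exact HE0.
Qed.

Lemma pow_le1 (x : R) (n : nat) : 0 <= x -> x <= 1 -> x ^ n <= 1.
Proof.
  intros H0 H1. induction n; simpl. lra.
  assert (0 <= x ^ n) by (apply pow_le; lra). nra.
Qed.

Lemma pow_le_sq (x : R) (n : nat) : 0 <= x -> x <= 1 -> (2 <= n)%nat -> x ^ n <= x ^ 2.
Proof.
  intros H0 H1 Hn. replace n with (2 + (n - 2))%nat by lia.
  rewrite pow_add. assert (h := pow_le1 x (n-2) H0 H1).
  assert (0 <= x ^ 2) by (apply pow_le; lra). nra.
Qed.

Lemma pow_zero_inv (x : R) (n : nat) : x ^ n = 0 -> x = 0.
Proof.
  intros H. destruct (Req_dec x 0); auto. exfalso. exact (pow_nonzero x n H0 H).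
Qed.

Lemma minB (X Y Z K : R) : 0 < X -> 0 < Y -> 0 < Z -> Z <= X -> Z <= Y ->
  X^2 + Y^2 + Z^2 = 1 -> 0 <= K -> K <= 1/6 ->
  X*Y*Z*Rabs (X^2 - Z^2) <= K*(X^2*Z^2) ->
  X*Y*Z*Rabs (Y^2 - Z^2) <= K*(Y^2*Z^2) -> 1/2 <= Z.
Proof.
  intros hX hY hZ zx zy hs hK0 hK1 h1 h2.
  assert (a1 := Rle_abs (X^2 - Z^2)). assert (a2 := Rle_abs (Y^2 - Z^2)).
  assert (b1 : X*Z*(Y*(X^2 - Z^2)) <= X*Z*(K*X*Z)).
  { assert (0 <= X*Y*Z) by (apply Rmult_le_pos; [apply Rmult_le_pos|]; lra).
    assert (X*Y*Z*(X^2 - Z^2) <= X*Y*Z*Rabs (X^2 - Z^2)) by (apply Rmult_le_compat_l; lra).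
    replace (X*Z*(Y*(X^2-Z^2))) with (X*Y*Z*(X^2-Z^2)) by ring.
    replace (X*Z*(K*X*Z)) with (K*(X^2*Z^2)) by ring. lra. }
  assert (b2 : Y*Z*(X*(Y^2 - Z^2)) <= Y*Z*(K*Y*Z)).
  { assert (0 <= X*Y*Z) by (apply Rmult_le_pos; [apply Rmult_le_pos|]; lra).
    assert (X*Y*Z*(Y^2 - Z^2) <= X*Y*Z*Rabs (Y^2 - Z^2)) by (apply Rmult_le_compat_l; lra).
    replace (Y*Z*(X*(Y^2-Z^2))) with (X*Y*Z*(Y^2-Z^2)) by ring.
    replace (Y*Z*(K*Y*Z)) with (K*(Y^2*Z^2)) by ring. lra. }
  assert (0 < X*Z) by nra. assert (0 < Y*Z) by nra.
  apply Rmult_le_reg_l in b1; [|lra]. apply Rmult_le_reg_l in b2; [|lra].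
  assert (K*X*Z <= K*X*Y) by (apply Rmult_le_compat_l; nra).
  assert (K*Y*Z <= K*Y*X) by (apply Rmult_le_compat_l; nra).
  assert (c1 : Y*(X^2 - Z^2) <= Y*(K*X)) by (replace (Y*(K*X)) with (K*X*Y) by ring; lra).
  assert (c2 : X*(Y^2 - Z^2) <= X*(K*Y)) by (replace (X*(K*Y)) with (K*Y*X) by ring; lra).
  apply Rmult_le_reg_l in c1; [|lra]. apply Rmult_le_reg_l in c2; [|lra].
  assert (d : X + Y <= 3/2) by nra.
  assert (Z^2 >= 1/4) by nra.
  nra.
Qed.

Lemma prod_ge (X Y Z : R) : 1/2 <= X -> 1/2 <= Y -> 1/2 <= Z -> 1/8 <= X*Y*Z.
Proof.
  intros. assert (1/4 <= X*Y).
  { replace (1/4) with (1/2*(1/2)) by field. apply Rmult_le_compat; lra. }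
  replace (1/8) with (1/4*(1/2)) by field. apply Rmult_le_compat; lra.
Qed.

Lemma realB (X Y Z K : R) : 0 < X -> 0 < Y -> 0 < Z ->
  X^2 + Y^2 + Z^2 = 1 -> 0 <= K -> K <= 1/6 ->
  X*Y*Z*Rabs (X^2 - Y^2) <= K*(X^2*Y^2) ->
  X*Y*Z*Rabs (X^2 - Z^2) <= K*(X^2*Z^2) ->
  X*Y*Z*Rabs (Y^2 - Z^2) <= K*(Y^2*Z^2) -> 1/8 <= X*Y*Z.
Proof.
  intros hX hY hZ hs hK0 hK1 hxy hxz hyz.
  pose proof hxy as hyx. rewrite Rabs_minus_sym in hyx.
  pose proof hxz as hzx. rewrite Rabs_minus_sym in hzx.
  pose proof hyz as hzy. rewrite Rabs_minus_sym in hzy.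
  destruct (Rle_dec Z X) as [zx|xz]; destruct (Rle_dec Z Y) as [zy|yz].
  - assert (m := minB X Y Z K hX hY hZ zx zy hs hK0 hK1 hxz hyz). apply prod_ge; lra.
  - assert (m : 1/2 <= Y) by (apply (minB X Z Y K); lra). apply prod_ge; lra.
  - assert (m : 1/2 <= X) by (apply (minB Y Z X K); lra). apply prod_ge; lra.
  - destruct (Rle_dec X Y) as [xy|yx].
    + assert (m : 1/2 <= X) by (apply (minB Y Z X K); lra). apply prod_ge; lra.
    + assert (m : 1/2 <= Y) by (apply (minB X Z Y K); lra). apply prod_ge; lra.
Qed.

Lemma realA (X Y Z a W c : R) (p q r : nat) :
  0 <= X -> 0 <= Y -> 0 <= Z -> 0 < X^2 + Y^2 + Z^2 -> X^2 + Y^2 + Z^2 <= 121/100 ->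
  (1 <= p)%nat -> (1 <= q)%nat -> (1 <= r)%nat ->
  INR p < a -> INR q < a -> INR r < a ->
  / INR p + / INR q + / INR r <= 1 -> 0 < W -> 0 <= c ->
  INR p * X ^ p * W = a * (X*Y*Z) * (c * X^2 + W) ->
  INR q * Y ^ q * W = a * (X*Y*Z) * (c * Y^2 + W) ->
  INR r * Z ^ r * W = a * (X*Y*Z) * (c * Z^2 + W) -> False.
Proof.
  intros hX hY hZ hs0 hs1 hp hq hr ap aq ar hS hW hc e1 e2 e3.
  assert (ip : 0 < INR p) by (apply lt_0_INR; lia).
  assert (iq : 0 < INR q) by (apply lt_0_INR; lia).
  assert (ir : 0 < INR r) by (apply lt_0_INR; lia).
  set (P := X*Y*Z) in *.
  assert (hP : 0 <= P) by (unfold P; apply Rmult_le_pos; [apply Rmult_le_pos|]; lra).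
  destruct (Req_dec P 0) as [P0|P0].
  - rewrite P0 in e1, e2, e3. rewrite Rmult_0_r, Rmult_0_l in e1, e2, e3.
    assert (X ^ p = 0) by (apply (Rmult_eq_reg_l (INR p * W)); [|nra]; nra).
    assert (Y ^ q = 0) by (apply (Rmult_eq_reg_l (INR q * W)); [|nra]; nra).
    assert (Z ^ r = 0) by (apply (Rmult_eq_reg_l (INR r * W)); [|nra]; nra).
    apply pow_zero_inv in H, H0, H1. subst. lra.
  - assert (Pp : 0 < P) by lra.
    assert (X <> 0) by (intro; subst; unfold P in P0; apply P0; ring).
    assert (Y <> 0) by (intro; subst; unfold P in P0; apply P0; ring).
    assert (Z <> 0) by (intro; subst; unfold P in P0; apply P0; ring).
    assert (Xp : 0 < X) by lra. assert (Yp : 0 < Y) by lra. assert (Zp : 0 < Z) by lra.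
    assert (gx : P < X ^ p).
    { assert (a*P*(c*X^2+W) >= a*P*W) by (assert (0 <= c*X^2) by nra; assert (0 < a*P) by nra; nra).
      assert (INR p * P * W < a * P * W) by (assert (0 < P*W) by nra; nra).
      assert (k3 : INR p * W * P < INR p * W * X^p) by lra.
      apply Rmult_lt_reg_l in k3; nra. }
    assert (gy : P < Y ^ q).
    { assert (a*P*(c*Y^2+W) >= a*P*W) by (assert (0 <= c*Y^2) by nra; assert (0 < a*P) by nra; nra).
      assert (INR q * P * W < a * P * W) by (assert (0 < P*W) by nra; nra).
      assert (k3 : INR q * W * P < INR q * W * Y^q) by lra.
      apply Rmult_lt_reg_l in k3; nra. }
    assert (gz : P < Z ^ r).
    { assert (a*P*(c*Z^2+W) >= a*P*W) by (assert (0 <= c*Z^2) by nra; assert (0 < a*P) by nra; nra).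
      assert (INR r * P * W < a * P * W) by (assert (0 < P*W) by nra; nra).
      assert (k3 : INR r * W * P < INR r * W * Z^r) by lra.
      apply Rmult_lt_reg_l in k3; nra. }
    assert (P1 : P < 1).
    { assert (P*P <= 1/2).
      { replace (P*P) with (X^2*Y^2*Z^2) by (unfold P; ring).
        assert (0 <= X^2) by nra. assert (0 <= Y^2) by nra. assert (0 <= Z^2) by nra.
        assert (4*(X^2*Y^2) <= (X^2+Y^2)*(X^2+Y^2)) by (assert (hh := Rle_0_sqr (X^2 - Y^2)); unfold Rsqr in hh; lra).
        assert ((X^2+Y^2)*(X^2+Y^2) <= (121/100)*(121/100)) by (apply Rmult_le_compat; lra).
        assert (X^2*Y^2 <= 37/100) by lra.
        assert (Z^2 <= 121/100) by lra.
        assert (X^2*Y^2*Z^2 <= 37/100*(121/100)) by (apply Rmult_le_compat; nra).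
        lra. }
      nra. }
    assert (lP : ln P < 0) by (rewrite <- ln_1; apply ln_increasing; lra).
    assert (lx : ln P < INR p * ln X) by (rewrite <- ln_pow by lra; apply ln_increasing; lra).
    assert (ly : ln P < INR q * ln Y) by (rewrite <- ln_pow by lra; apply ln_increasing; lra).
    assert (lz : ln P < INR r * ln Z) by (rewrite <- ln_pow by lra; apply ln_increasing; lra).
    assert (lsum : ln P = ln X + ln Y + ln Z) by (unfold P; rewrite !ln_mult; try nra; lra).
    assert (jx : ln P * / INR p < ln X).
    { apply (Rmult_lt_reg_l (INR p)); [lra|]. field_simplify; lra. }
    assert (jy : ln P * / INR q < ln Y).
    { apply (Rmult_lt_reg_l (INR q)); [lra|]. field_simplify; lra. }
    assert (jz : ln P * / INR r < ln Z).
    { apply (Rmult_lt_reg_l (INR r)); [lra|]. field_simplify; lra. }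
    assert (ln P * (/ INR p + / INR q + / INR r) >= ln P) by nra.
    nra.
Qed.

Lemma Cmod_cpow (z : C) (n : nat) : Cmod (cpow z n) = Cmod z ^ n.
Proof.
  induction n; simpl. apply Cmod_1. rewrite Cmod_mult, IHn. reflexivity.
Qed.

Lemma cpow0 (n : nat) : (1 <= n)%nat -> cpow (RtoC 0) n = RtoC 0.
Proof. intros H. destruct n. lia. simpl. apply Cmult_0_l. Qed.

Lemma dcp_mul (z : C) (n : nat) : (1 <= n)%nat ->
  Cmult z (dcp z n) = Cmult (RtoC (INR n)) (cpow z n).
Proof. intros H. destruct n. lia. unfold dcp. simpl cpow. ring. Qed.

Lemma dcp_zero (n : nat) : (2 <= n)%nat -> dcp (RtoC 0) n = RtoC 0.
Proof.
  intros H. destruct n as [|[|k]]; try lia. unfold dcp. simpl cpow.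
  rewrite Cmult_0_l, Cmult_0_r. reflexivity.
Qed.

Lemma nrm_sq (w : C3) : nrm2 w = nrm w ^ 2.
Proof.
  unfold nrm. simpl. rewrite Rmult_1_r. rewrite sqrt_sqrt. reflexivity.
  unfold nrm2. assert (h1 := pow2_ge_0 (Cmod (cx w))). assert (h2 := pow2_ge_0 (Cmod (cy w))).
  assert (h3 := pow2_ge_0 (Cmod (cz w))). lra.
Qed.

Definition HasMu p q r a (w : C3) : Prop :=
  exists mu : C, g1 p a w = Cmult mu (Cconj (cx w)) /\ g2 q a w = Cmult mu (Cconj (cy w)) /\
                    g3 r a w = Cmult mu (Cconj (cz w)).

Definition Aof a (w : C3) : C := Cmult (RtoC a) (Cmult (cx w) (Cmult (cy w) (cz w))).

Lemma eqs p q r a w mu : (1 <= p)%nat -> (1 <= q)%nat -> (1 <= r)%nat ->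
  g1 p a w = Cmult mu (Cconj (cx w)) -> g2 q a w = Cmult mu (Cconj (cy w)) ->
  g3 r a w = Cmult mu (Cconj (cz w)) ->
  (RtoC (INR p) * cpow (cx w) p + Aof a w = mu * RtoC (Cmod (cx w) ^ 2))%C /\
  (RtoC (INR q) * cpow (cy w) q + Aof a w = mu * RtoC (Cmod (cy w) ^ 2))%C /\
  (RtoC (INR r) * cpow (cz w) r + Aof a w = mu * RtoC (Cmod (cz w) ^ 2))%C.
Proof.
  intros hp hq hr h1 h2 h3. rewrite !RtoC_Cmod2. unfold Aof.
  split; [|split].
  - rewrite <- dcp_mul by exact hp.
    transitivity (cx w * g1 p a w)%C. unfold g1. ring. rewrite h1. ring.
  - rewrite <- dcp_mul by exact hq.
    transitivity (cy w * g2 q a w)%C. unfold g2. ring. rewrite h2. ring.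
  - rewrite <- dcp_mul by exact hr.
    transitivity (cz w * g3 r a w)%C. unfold g3. ring. rewrite h3. ring.
Qed.

Lemma Cmod_Aof a w : 0 <= a -> Cmod (Aof a w) = a * (Cmod (cx w) * Cmod (cy w) * Cmod (cz w)).
Proof.
  intros ha. unfold Aof. rewrite !Cmod_mult, Cmod_R, Rabs_pos_eq by exact ha. ring.
Qed.

Lemma fpqr_eq p q r a w :
  fpqr p q r a w = (cpow (cx w) p + cpow (cy w) q + cpow (cz w) r + Aof a w)%C.
Proof. reflexivity. Qed.

Lemma c_nonneg (p q r : nat) : (1 <= p)%nat -> (1 <= q)%nat -> (1 <= r)%nat ->
  / INR p + / INR q + / INR r <= 1 ->
  0 <= INR p * INR q * INR r - INR q * INR r - INR p * INR r - INR p * INR q.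
Proof.
  intros hp hq hr hS.
  assert (ip : 0 < INR p) by (apply lt_0_INR; lia).
  assert (iq : 0 < INR q) by (apply lt_0_INR; lia).
  assert (ir : 0 < INR r) by (apply lt_0_INR; lia).
  assert (E : INR q * INR r + INR p * INR r + INR p * INR q =
              INR p * INR q * INR r * (/ INR p + / INR q + / INR r)) by (field; lra).
  assert (0 < INR p * INR q * INR r) by (apply Rmult_lt_0_compat; [apply Rmult_lt_0_compat|]; lra).
  assert (INR p * INR q * INR r * (/ INR p + / INR q + / INR r) <= INR p * INR q * INR r * 1)
    by (apply Rmult_le_compat_l; lra).
  lra.
Qed.

Lemma noMu_A p q r a w : (1 <= p)%nat -> (1 <= q)%nat -> (1 <= r)%nat ->
  / INR p + / INR q + / INR r <= 1 ->
  INR p < a -> INR q < a -> INR r < a ->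
  0 < nrm2 w -> nrm2 w <= 121/100 ->
  fpqr p q r a w = RtoC 0 -> ~ HasMu p q r a w.
Proof.
  intros hp hq hr hS ap aq ar n0 n1 hf [mu [h1 [h2 h3]]].
  destruct (eqs p q r a w mu hp hq hr h1 h2 h3) as [E1 [E2 E3]].
  rewrite fpqr_eq in hf.
  set (x := cx w) in *. set (y := cy w) in *. set (z := cz w) in *.
  set (X := Cmod x) in *. set (Y := Cmod y) in *. set (Z := Cmod z) in *.
  set (A := Aof a w) in *.
  set (u := cpow x p) in *. set (v := cpow y q) in *. set (t := cpow z r) in *.
  assert (ip : 0 < INR p) by (apply lt_0_INR; lia).
  assert (iq : 0 < INR q) by (apply lt_0_INR; lia).
  assert (ir : 0 < INR r) by (apply lt_0_INR; lia).
  set (W := INR q * INR r * X^2 + INR p * INR r * Y^2 + INR p * INR q * Z^2).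
  set (c := INR p * INR q * INR r - INR q * INR r - INR p * INR r - INR p * INR q).
  assert (hc : 0 <= c) by (apply c_nonneg; assumption).
  assert (hW : 0 < W).
  { unfold nrm2 in n0. fold x y z X Y Z in n0.
    assert (0 <= X^2) by apply pow2_ge_0. assert (0 <= Y^2) by apply pow2_ge_0.
    assert (0 <= Z^2) by apply pow2_ge_0.
    assert (1 <= INR p) by (apply (le_INR 1); lia).
    assert (1 <= INR q) by (apply (le_INR 1); lia).
    assert (1 <= INR r) by (apply (le_INR 1); lia).
    assert (1 <= INR q * INR r) by nra. assert (1 <= INR p * INR r) by nra.
    assert (1 <= INR p * INR q) by nra.
    unfold W. nra. }
  assert (HmuW : (mu * RtoC W = - (RtoC c * A))%C).
  { assert (Hid : (mu * RtoC W + RtoC c * A =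
       RtoC (INR q * INR r) * (mu * RtoC (X^2) - (RtoC (INR p) * u + A))
     + RtoC (INR p * INR r) * (mu * RtoC (Y^2) - (RtoC (INR q) * v + A))
     + RtoC (INR p * INR q) * (mu * RtoC (Z^2) - (RtoC (INR r) * t + A))
     + RtoC (INR p * INR q * INR r) * (u + v + t + A))%C).
    { unfold W, c. rewrite !RtoC_plus, !RtoC_minus, !RtoC_mult. ring. }
    rewrite E1, E2, E3, hf in Hid.
    transitivity (mu * RtoC W + RtoC c * A - RtoC c * A)%C. ring.
    rewrite Hid. ring. }
  assert (key : forall (n : nat) (U : C) (XX : R),
     (RtoC (INR n) * U + A = mu * RtoC (XX^2))%C ->
     (RtoC (INR n) * U * RtoC W = - (A * RtoC (c * XX^2 + W)))%C).
  { intros n U XX HE.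
    assert (HU : (RtoC (INR n) * U = mu * RtoC (XX^2) - A)%C).
    { rewrite <- HE. ring. }
    rewrite HU. rewrite RtoC_plus, RtoC_mult.
    transitivity (RtoC (XX^2) * (mu * RtoC W) - A * RtoC W)%C. ring.
    rewrite HmuW. ring. }
  assert (modeq : forall (n : nat) (U : C) (XX : R), Cmod U = XX ^ n ->
     (RtoC (INR n) * U + A = mu * RtoC (XX^2))%C ->
     INR n * XX ^ n * W = a * (X*Y*Z) * (c * XX^2 + W)).
  { intros n U XX HU HE. apply key in HE.
    apply (f_equal Cmod) in HE. rewrite Cmod_opp, !Cmod_mult, !Cmod_R in HE.
    unfold A in HE. rewrite Cmod_Aof in HE by lra. fold x y z X Y Z in HE.
    rewrite HU in HE.
    assert (0 <= c * XX^2) by (apply Rmult_le_pos; [lra | apply pow2_ge_0]).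
    rewrite (Rabs_pos_eq (INR n)) in HE by apply pos_INR.
    rewrite (Rabs_pos_eq W) in HE by lra.
    rewrite (Rabs_pos_eq (c * XX^2 + W)) in HE by lra. exact HE. }
  assert (e1 := modeq p u X (Cmod_cpow x p) E1).
  assert (e2 := modeq q v Y (Cmod_cpow y q) E2).
  assert (e3 := modeq r t Z (Cmod_cpow z r) E3).
  unfold nrm2 in n0, n1.
  apply (realA X Y Z a W c p q r); try assumption; apply Cmod_ge_0.
Qed.

Lemma pairineq (A mu ui uj : C) (pi pj : nat) (Xi Xj Mr a P : R) :
  (RtoC (INR pi) * ui + A = mu * RtoC (Xi^2))%C ->
  (RtoC (INR pj) * uj + A = mu * RtoC (Xj^2))%C ->
  Cmod ui = Xi ^ pi -> Cmod uj = Xj ^ pj -> Cmod A = a * P ->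
  0 <= Xi <= 1 -> 0 <= Xj <= 1 -> (2 <= pi)%nat -> (2 <= pj)%nat ->
  INR pi <= Mr -> INR pj <= Mr ->
  a * P * Rabs (Xi^2 - Xj^2) <= 2 * Mr * (Xi^2 * Xj^2).
Proof.
  intros Ei Ej Hi Hj HA hxi hxj hpi hpj mi mj.
  assert (Hid : (A * RtoC (Xj^2 - Xi^2) =
     RtoC (INR pj) * uj * RtoC (Xi^2) - RtoC (INR pi) * ui * RtoC (Xj^2))%C).
  { rewrite RtoC_minus.
    transitivity (RtoC (INR pj) * uj * RtoC (Xi^2) - RtoC (INR pi) * ui * RtoC (Xj^2)
      - ((RtoC (INR pj) * uj + A) * RtoC (Xi^2) - (RtoC (INR pi) * ui + A) * RtoC (Xj^2)))%C.
    - ring.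
    - rewrite Ei, Ej. ring. }
  apply (f_equal Cmod) in Hid.
  rewrite Cmod_mult, Cmod_R, HA in Hid.
  assert (tri := Cmod_triangle (RtoC (INR pj) * uj * RtoC (Xi^2))
                   (- (RtoC (INR pi) * ui * RtoC (Xj^2)))%C).
  rewrite Cmod_opp, !Cmod_mult, !Cmod_R, Hi, Hj in tri.
  change (RtoC (INR pj) * uj * RtoC (Xi ^ 2) + - (RtoC (INR pi) * ui * RtoC (Xj ^ 2)))%C
    with (RtoC (INR pj) * uj * RtoC (Xi ^ 2) - RtoC (INR pi) * ui * RtoC (Xj ^ 2))%C in tri.
  rewrite <- Hid in tri.
  rewrite (Rabs_pos_eq (INR pi)), (Rabs_pos_eq (INR pj)) in tri by apply pos_INR.
  rewrite (Rabs_pos_eq (Xi^2)), (Rabs_pos_eq (Xj^2)) in tri by apply pow2_ge_0.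
  rewrite Rabs_minus_sym.
  assert (a1 := pow_le_sq Xi pi (proj1 hxi) (proj2 hxi) hpi).
  assert (a2 := pow_le_sq Xj pj (proj1 hxj) (proj2 hxj) hpj).
  assert (0 <= Xi^2) by apply pow2_ge_0. assert (0 <= Xj^2) by apply pow2_ge_0.
  assert (0 <= Xi^pi) by (apply pow_le; lra). assert (0 <= Xj^pj) by (apply pow_le; lra).
  assert (i1 : INR pj * Xj ^ pj * Xi ^ 2 <= Mr * Xj^2 * Xi^2).
  { apply Rmult_le_compat_r; [lra|]. apply Rmult_le_compat; try lra. apply pos_INR. }
  assert (i2 : INR pi * Xi ^ pi * Xj ^ 2 <= Mr * Xi^2 * Xj^2).
  { apply Rmult_le_compat_r; [lra|]. apply Rmult_le_compat; try lra. apply pos_INR. }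
  lra.
Qed.

Lemma Cmod_lower (u v t A : C) :
  Cmod A - Cmod u - Cmod v - Cmod t <= Cmod (u + v + t + A)%C.
Proof.
  assert (E : A = ((u + v + t + A) + (- u) + (- v) + (- t))%C) by ring.
  assert (h := Cmod_triangle ((u + v + t + A) + (- u) + (- v))%C (- t)%C).
  assert (h2 := Cmod_triangle ((u + v + t + A) + (- u))%C (- v)%C).
  assert (h3 := Cmod_triangle (u + v + t + A)%C (- u)%C).
  rewrite !Cmod_opp in h, h2, h3. rewrite <- E in h. lra.
Qed.

Lemma two_zero (a : R) (t : C) (n : nat) (s : C) :
  1 < a -> Cmod t = 1 -> s = cpow t n -> Cmod s <= / a -> False.
Proof.
  intros ha ht hs hm. rewrite hs, Cmod_cpow, ht, pow1 in hm.
  assert (/ a < 1) by (rewrite <- Rinv_1; apply Rinv_lt_contravar; lra). lra.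
Qed.

Lemma Cmult_eq0 (u v : C) : (u * v)%C = RtoC 0 -> u = RtoC 0 \/ v = RtoC 0.
Proof.
  intros H. destruct (Ceq_dec u 0) as [e|e]; [left; exact e|].
  destruct (Ceq_dec v 0) as [e'|e']; [right; exact e'|].
  exfalso. exact (Cmult_neq_0 u v e e' H).
Qed.

Lemma divA (a P R Mr Q : R) : 0 < a -> a * P * R <= 2 * Mr * Q -> P * R <= (2 * Mr / a) * Q.
Proof.
  intros ha h. apply (Rmult_le_reg_l a); [lra|].
  replace (a * (2 * Mr / a * Q)) with (2 * Mr * Q) by (field; lra). lra.
Qed.

Lemma zero_prod (u y z mu : C) (n : nat) (a : R) : (2 <= n)%nat -> a <> 0 -> u = RtoC 0 ->
  Cplus (dcp u n) (Cmult (RtoC a) (Cmult y z)) = Cmult mu (Cconj u) ->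
  y = RtoC 0 \/ z = RtoC 0.
Proof.
  intros hn ha hu h. subst u. rewrite dcp_zero in h by exact hn.
  assert (Cconj (RtoC 0) = RtoC 0) by apply conj_RtoC.
  rewrite H, Cmult_0_r, Cplus_0_l in h.
  apply Cmult_eq0 in h. destruct h as [h|h].
  - exfalso. apply ha. apply RtoC_inj in h. exact h.
  - apply Cmult_eq0 in h. exact h.
Qed.

Lemma unit_mod (X Y Z : R) : X = 0 -> Y = 0 -> 0 <= Z -> X^2 + Y^2 + Z^2 = 1 -> Z = 1.
Proof. intros; subst. nra. Qed.

Lemma noMu_B p q r a Mr w : (2 <= p)%nat -> (2 <= q)%nat -> (2 <= r)%nat ->
  INR p <= Mr -> INR q <= Mr -> INR r <= Mr -> 12 * Mr < a ->
  nrm2 w = 1 -> Cmod (fpqr p q r a w) <= / a -> ~ HasMu p q r a w.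
Proof.
  intros hp hq hr mp mq mr ha hn hf [mu [h1 [h2 h3]]].
  assert (M2 : 2 <= INR p) by (apply (le_INR 2); lia).
  assert (a24 : 24 <= a) by lra.
  assert (an : a <> 0) by lra.
  destruct (eqs p q r a w mu ltac:(lia) ltac:(lia) ltac:(lia) h1 h2 h3) as [E1 [E2 E3]].
  rewrite fpqr_eq in hf.
  unfold nrm2 in hn.
  assert (c0 := Cmod_0).
  assert (cx0 := Cmod_ge_0 (cx w)). assert (cy0 := Cmod_ge_0 (cy w)). assert (cz0 := Cmod_ge_0 (cz w)).
  assert (A0 : forall x y z : C, (x = RtoC 0 \/ y = RtoC 0 \/ z = RtoC 0) ->
            Cmult (RtoC a) (Cmult x (Cmult y z)) = RtoC 0).
  { intros x y z [e|[e|e]]; rewrite e; ring. }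
  set (F := (cpow (cx w) p + cpow (cy w) q + cpow (cz w) r + Aof a w)%C) in hf.
  destruct (Ceq_dec (cx w) 0) as [x0|x0].
  - destruct (zero_prod _ _ _ _ p a hp an x0 h1) as [y0|z0].
    + apply (two_zero a (cz w) r F ltac:(lra)); [| |exact hf].
      * apply (unit_mod (Cmod (cx w)) (Cmod (cy w))); try lra.
        rewrite x0; exact c0. rewrite y0; exact c0.
      * unfold F, Aof. rewrite x0, y0, A0 by tauto. rewrite !cpow0 by lia. ring.
    + apply (two_zero a (cy w) q F ltac:(lra)); [| |exact hf].
      * apply (unit_mod (Cmod (cx w)) (Cmod (cz w))); try lra.
        rewrite x0; exact c0. rewrite z0; exact c0.
      * unfold F, Aof. rewrite x0, z0, A0 by tauto. rewrite !cpow0 by lia. ring.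
  - destruct (Ceq_dec (cy w) 0) as [y0|y0].
    + destruct (zero_prod _ _ _ _ q a hq an y0 h2) as [xx|z0]; [contradiction|].
      apply (two_zero a (cx w) p F ltac:(lra)); [| |exact hf].
      * apply (unit_mod (Cmod (cy w)) (Cmod (cz w))); try lra.
        rewrite y0; exact c0. rewrite z0; exact c0.
      * unfold F, Aof. rewrite y0, z0, A0 by tauto. rewrite !cpow0 by lia. ring.
    + destruct (Ceq_dec (cz w) 0) as [z0|z0].
      * destruct (zero_prod _ _ _ _ r a hr an z0 h3) as [xx|yy]; contradiction.
      *
        set (X := Cmod (cx w)) in *. set (Y := Cmod (cy w)) in *. set (Z := Cmod (cz w)) in *.
        assert (Xp : 0 < X) by (apply Cmod_gt_0; exact x0).
        assert (Yp : 0 < Y) by (apply Cmod_gt_0; exact y0).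
        assert (Zp : 0 < Z) by (apply Cmod_gt_0; exact z0).
        assert (X1 : X <= 1) by nra. assert (Y1 : Y <= 1) by nra. assert (Z1 : Z <= 1) by nra.
        assert (HA := Cmod_Aof a w ltac:(lra)). fold X Y Z in HA.
        assert (pxy := pairineq _ _ _ _ p q X Y Mr a (X*Y*Z) E1 E2 (Cmod_cpow _ _) (Cmod_cpow _ _) HA
                         ltac:(lra) ltac:(lra) hp hq mp mq).
        assert (pxz := pairineq _ _ _ _ p r X Z Mr a (X*Y*Z) E1 E3 (Cmod_cpow _ _) (Cmod_cpow _ _) HA
                         ltac:(lra) ltac:(lra) hp hr mp mr).
        assert (pyz := pairineq _ _ _ _ q r Y Z Mr a (X*Y*Z) E2 E3 (Cmod_cpow _ _) (Cmod_cpow _ _) HA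
                         ltac:(lra) ltac:(lra) hq hr mq mr).
        apply divA in pxy, pxz, pyz; try lra.
        assert (K0 : 0 <= 2 * Mr / a) by (apply Rmult_le_pos; [lra | left; apply Rinv_0_lt_compat; lra]).
        assert (K1 : 2 * Mr / a <= 1/6).
        { apply (Rmult_le_reg_l a); [lra|]. replace (a * (2 * Mr / a)) with (2 * Mr) by (field; lra). lra. }
        assert (P8 := realB X Y Z (2 * Mr / a) Xp Yp Zp hn K0 K1 pxy pxz pyz).
        unfold F in hf.
        assert (low := Cmod_lower (cpow (cx w) p) (cpow (cy w) q) (cpow (cz w) r) (Aof a w)).
        rewrite HA, !Cmod_cpow in low. fold X Y Z in low.
        assert (b1 := pow_le_sq X p ltac:(lra) X1 hp).
        assert (b2 := pow_le_sq Y q ltac:(lra) Y1 hq).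
        assert (b3 := pow_le_sq Z r ltac:(lra) Z1 hr).
        assert (ia : / a < 1) by (rewrite <- Rinv_1; apply Rinv_lt_contravar; lra).
        assert (a * (X*Y*Z) >= a * (1/8)) by (apply Rmult_ge_compat_l; lra).
        lra.
Qed.

Lemma Cmod_cexpi th : Cmod (cexpi th) = 1.
Proof.
  unfold Cmod, cexpi. simpl fst. simpl snd.
  assert (h := sin2_cos2 th). unfold Rsqr in h.
  replace (cos th ^ 2 + sin th ^ 2) with 1 by (simpl; lra). apply sqrt_1.
Qed.

Lemma ge2 (p q r : nat) : (0 < p)%nat -> (0 < q)%nat -> (0 < r)%nat ->
  / INR p + / INR q + / INR r <= 1 -> (2 <= p)%nat.
Proof.
  intros hp hq hr hS. destruct (Nat.eq_dec p 1) as [e|e]; [|lia].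
  subst. exfalso. simpl in hS.
  assert (0 < / INR q) by (apply Rinv_0_lt_compat, lt_0_INR; lia).
  assert (0 < / INR r) by (apply Rinv_0_lt_compat, lt_0_INR; lia).
  rewrite Rinv_1 in hS. lra.
Qed.

Lemma transverse_of p q r a w : 0 < nrm2 w -> ~ HasMu p q r a w ->
  transverse_at (fpqr p q r a) w.
Proof.
  intros hn hm. exists (Lf p q r a w). split. apply fd_f.
  intros c. unfold Lf. apply transv; assumption.
Qed.

Lemma part2 p q r m a th w : (2 <= p)%nat -> (2 <= q)%nat -> (2 <= r)%nat ->
  0 < m -> m ^ 2 * (m + 3) < a -> 24 < a ->
  Va p q r a (Cmult (RtoC (/ a)) (cexpi th)) w ->
  Rmax (Cmod (cx w)) (Rmax (Cmod (cy w)) (Cmod (cz w))) > m / a.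
Proof.
  intros hp hq hr hm ha ha24 [hf hn].
  destruct (Rle_or_lt (Rmax (Cmod (cx w)) (Rmax (Cmod (cy w)) (Cmod (cz w)))) (m / a)) as [le|gt];
    [|exact gt].
  exfalso.
  assert (ma : m <= a).
  { destruct (Rle_or_lt 1 m). assert (m * 1 <= m * (m*(m+3))) by (apply Rmult_le_compat_l; nra). nra. lra. }
  set (k := m / a) in *.
  assert (k0 : 0 < k) by (unfold k; apply Rdiv_lt_0_compat; lra).
  assert (k1 : k <= 1) by (unfold k; apply (Rmult_le_reg_l a); [lra|]; replace (a * (m/a)) with m by (field; lra); lra).
  set (X := Cmod (cx w)) in *. set (Y := Cmod (cy w)) in *. set (Z := Cmod (cz w)) in *.
  assert (X0 : 0 <= X) by apply Cmod_ge_0. assert (Y0 : 0 <= Y) by apply Cmod_ge_0.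
  assert (Z0 : 0 <= Z) by apply Cmod_ge_0.
  assert (Xk : X <= k) by (eapply Rle_trans; [apply Rmax_l | exact le]).
  assert (Yk : Y <= k) by (eapply Rle_trans; [eapply Rle_trans; [apply Rmax_l | apply Rmax_r] | exact le]).
  assert (Zk : Z <= k) by (eapply Rle_trans; [eapply Rle_trans; [apply Rmax_r | apply Rmax_r] | exact le]).
  apply (f_equal Cmod) in hf.
  rewrite Cmod_mult, Cmod_R, Cmod_cexpi, Rmult_1_r in hf.
  rewrite Rabs_pos_eq in hf by (left; apply Rinv_0_lt_compat; lra).
  rewrite fpqr_eq in hf.
  assert (t1 := Cmod_triangle (cpow (cx w) p + cpow (cy w) q + cpow (cz w) r)%C (Aof a w)).
  assert (t2 := Cmod_triangle (cpow (cx w) p + cpow (cy w) q)%C (cpow (cz w) r)).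
  assert (t3 := Cmod_triangle (cpow (cx w) p) (cpow (cy w) q)).
  rewrite hf in t1. rewrite Cmod_Aof in t1 by lra. rewrite !Cmod_cpow in t2. rewrite !Cmod_cpow in t3.
  fold X Y Z in t1, t2, t3.
  assert (b1 := pow_le_sq X p X0 ltac:(lra) hp).
  assert (b2 := pow_le_sq Y q Y0 ltac:(lra) hq).
  assert (b3 := pow_le_sq Z r Z0 ltac:(lra) hr).
  assert (X^2 <= k^2) by (apply pow_incr; lra).
  assert (Y^2 <= k^2) by (apply pow_incr; lra).
  assert (Z^2 <= k^2) by (apply pow_incr; lra).
  assert (X*Y*Z <= k*k*k) by (apply Rmult_le_compat; try apply Rmult_le_compat; try nra).
  assert (a*(X*Y*Z) <= a*(k*k*k)) by (apply Rmult_le_compat_l; lra).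
  assert (E : 3 * k^2 + a * (k*k*k) = (m^2*(m+3)/a) * / a) by (unfold k; field; lra).
  assert (m^2*(m+3)/a < 1).
  { apply (Rmult_lt_reg_l a); [lra|]. replace (a * (m^2*(m+3)/a)) with (m^2*(m+3)) by (field; lra). lra. }
  assert ((m^2*(m+3)/a) * / a < 1 * / a) by (apply Rmult_lt_compat_r; [apply Rinv_0_lt_compat|]; lra).
  lra.
Qed.

Theorem lemma1p9 (p q r : nat) (m a : R) :
  (0 < p)%nat -> (0 < q)%nat -> (0 < r)%nat ->
  / INR p + / INR q + / INR r <= 1 ->
  0 < m ->
  a > Rmax (12 * INR (Nat.max p (Nat.max q r))) (m ^ 2 * (m + 3)) ->
  forall th : R,
    is_milnor_fiber (fpqr p q r a) (Va p q r a (Cmult (RtoC (/ a)) (cexpi th))) /\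
    (forall w : C3, Va p q r a (Cmult (RtoC (/ a)) (cexpi th)) w ->
       Rmax (Cmod (cx w)) (Rmax (Cmod (cy w)) (Cmod (cz w))) > m / a).
Proof.
  intros hp hq hr hS hm ha th.
  assert (p2 : (2 <= p)%nat) by (apply (ge2 p q r); assumption).
  assert (q2 : (2 <= q)%nat) by (apply (ge2 q p r); try assumption; lra).
  assert (r2 : (2 <= r)%nat) by (apply (ge2 r q p); try assumption; lra).
  set (Mr := INR (Nat.max p (Nat.max q r))) in *.
  assert (mp : INR p <= Mr) by (apply le_INR; lia).
  assert (mq : INR q <= Mr) by (apply le_INR; lia).
  assert (mr : INR r <= Mr) by (apply le_INR; lia).
  assert (ip : 2 <= INR p) by (apply (le_INR 2); lia).
  assert (h12 : 12 * Mr < a) by (eapply Rle_lt_trans; [apply Rmax_l | exact ha]).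
  assert (hm3 : m ^ 2 * (m + 3) < a) by (eapply Rle_lt_trans; [apply Rmax_r | exact ha]).
  split.
  - exists 1, (/ a), th. split; [lra|]. split.
    + exists (11/10). split; [lra|]. intros rho [r0 r1] w hw hf0.
      assert (hn : nrm2 w = rho ^ 2) by (rewrite nrm_sq, hw; reflexivity).
      apply transverse_of. rewrite hn. apply pow_lt; lra.
      apply noMu_A; try lia; try assumption; try lra.
      rewrite hn. apply pow_lt; lra.
      rewrite hn. replace (121/100) with ((11/10)^2) by (simpl; lra). apply pow_incr; lra.
    + split; [apply Rinv_0_lt_compat; lra|]. split.
      * intros s hs w hw hfs.
        assert (hn : nrm2 w = 1) by (rewrite nrm_sq, hw; simpl; ring).
        apply transverse_of. lra.
        apply (noMu_B p q r a Mr w); try assumption. rewrite hfs. exact hs.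
      * intros w. unfold Va. tauto.
  - intros w hw. apply (part2 p q r m a th w); try assumption; lra.
Qed.
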